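(* Let $n$ be one of the integers for which $\mathbb{Z}[\xi_n]$ has class number one, let $\mathcal{M}_n=\mathbb{Z}[\xi_n]$ with $\xi_n=\exp(2\pi i/n)$, and let $I$ be a principal ideal of $\mathcal{M}_n$ of finite index. Consider the Bravais coloring of $\mathcal{M}_n$ determined by $I$, with symmetry group $G=T(G)\rtimes D_N$ and color symmetry group $H$ (notation as in the context). Then $T(G)\le H$ and $\phi_1\in H$.
   Context: Standing assumption: $n\in\{3,4,5,7,8,9,11,12,13,15,16,17,19,20,21,24,25,27,28,32,33,35,36,40,44,45,48,60,84\}$ (the values for which $\mathcal{M}_n=\mathbb{Z}[\xi_n]$, $\xi_n=\exp(2\pi i/n)$, is a principal ideal domain). Let $\varphi$ be Euler's function and $N=n$ if $n$ is even, $N=2n$ if $n$ is odd. Using the $\mathbb{Z}$-basis $\{1,\xi_n,\dots,\xi_n^{\varphi(n)-1}\}$ of $\mathcal{M}_n$, each element is identified with its integer coordinate vector, so $\mathcal{M}_n$ becomes a lattice $\Lambda=\mathbb{Z}^{\varphi(n)}\subset\mathbb{R}^{\varphi(n)}$, and a principal ideal $I$ of index $\ell$ becomes a sublattice $L\subseteq\Lambda$ of index $\ell$. Let $\phi_1$ be the linear map of $\mathbb{R}^{\varphi(n)}$ induced by multiplication by $\exp(2\pi i/N)$ (an $N$-fold rotation, which preserves $\mathcal{M}_n$) and $\phi_2$ the linear map induced by complex conjugation (a reflection); they generate a group $D_N\cong$ dihedral group of order $2N$. Let $T(G)=\{t_y: x\mapsto x+y \mid y\in\Lambda\}$. The symmetry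 group of $\Lambda$ is $G=T(G)\rtimes D_N$. The Bravais coloring determined by $I$ assigns to each element of $\Lambda$ one of $\ell$ colors, two elements getting the same color iff they lie in the same coset of $L$ in $\Lambda$. The color symmetry group $H$ is the set of $g\in G$ that permute the colors, i.e. for every coset $x+L$ the image $g(x+L)$ is again a coset of $L$. The color fixing group $K$ is the set of $g\in H$ with $g(x+L)=x+L$ for every $x\in\Lambda$. *)

(* Defs.v *)
From HB Require Import structures.
From mathcomp Require Import all_boot all_order all_algebra.
From mathcomp Require Import reals trigo.
From mathcomp.real_closed Require Import complex.
Set Implicit Arguments. Unset Strict Implicit. Unset Printing Implicit Defensive.
Import Order.TTheory GRing.Theory Num.Theory.
Local Open Scope ring_scope.

Section Defs.
Variable R : realType.

Definition expi (m : nat) : R[i] :=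
  Complex (cos (2 * pi / m%:R)) (sin (2 * pi / m%:R)).

Definition xi (n : nat) : R[i] := expi n.

Definition NN (n : nat) : nat := if odd n then (2 * n)%N else n.

(* M_n = Z[xi_n]: the Z-span of the basis 1, xi_n, ..., xi_n^(phi(n)-1) *)
Definition inM (n : nat) (x : R[i]) : Prop :=
  exists c : 'I_(totient n) -> int, x = \sum_(k < totient n) (c k)%:~R * xi n ^+ k.

Definition inI (n : nat) (a : R[i]) (x : R[i]) : Prop :=
  exists m, inM n m /\ x = a * m.

Definition finite_index (n : nat) (a : R[i]) : Prop :=
  exists s : seq R[i], (forall y, y \in s -> inM n y) /\
    forall x, inM n x -> exists2 y, y \in s & inI n a (x - y).

Definition coset (n : nat) (a : R[i]) (x : R[i]) (w : R[i]) : Prop :=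
  exists l, inI n a l /\ w = x + l.

Definition phi1 (n : nat) (x : R[i]) : R[i] := expi (NN n) * x.
Definition phi2 (x : R[i]) : R[i] := (x^*)%C.

Definition transl (y : R[i]) (x : R[i]) : R[i] := x + y.

Definition inG (n : nat) (g : R[i] -> R[i]) : Prop :=
  exists (k : nat) (b : bool) (y : R[i]), inM n y /\
    forall x, g x = (iter k (phi1 n) (if b then phi2 x else x)) + y.

Definition permutes_colors (n : nat) (a : R[i]) (g : R[i] -> R[i]) : Prop :=
  forall x, inM n x -> exists z, inM n z /\
    forall w, (exists2 v, coset n a x v & w = g v) <-> coset n a z w.

Definition inH (n : nat) (a : R[i]) (g : R[i] -> R[i]) : Prop :=
  inG n g /\ permutes_colors n a g.

End Defs.

Definition PID_values : seq nat :=
  [:: 3; 4; 5; 7; 8; 9; 11; 12; 13; 15; 16; 17; 19; 20; 21; 24; 25; 27; 28;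
      32; 33; 35; 36; 40; 44; 45; 48; 60; 84]%N.

(* Main.v *)
Require Import Defs.
From HB Require Import structures.
From mathcomp Require Import all_boot all_order all_algebra.
From mathcomp Require Import reals trigo.
From mathcomp Require Import ring lra.
From mathcomp Require Import cyclotomic zify.
From mathcomp.real_closed Require Import complex.
Import Order.TTheory GRing.Theory Num.Theory.
Local Open Scope ring_scope.
Section S.
Variable R : realType.
Definition ang (t : R) : R[i] := Complex (cos t) (sin t).
Lemma mulE (a b c d : R) : (Complex a b) * (Complex c d) = Complex (a*c - b*d) (a*d + b*c) :> R[i].
Proof. by []. Qed.
Lemma angD s t : ang s * ang t = ang (s + t).
Proof. rewrite /ang mulE cosD sinD; congr Complex; ring. Qed.
Lemma ang0 : ang 0 = 1.
Proof. by rewrite /ang cos0 sin0. Qed.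
Lemma angX t k : ang t ^+ k = ang (t *+ k).
Proof.
elim: k => [|k IH]; first by rewrite expr0 mulr0n ang0.
by rewrite exprS IH angD mulrS.
Qed.
Lemma expiE m : expi R m = ang (2 * pi / m%:R).
Proof. by []. Qed.
Lemma expiX m k : (0 < m)%N -> expi R m ^+ k = ang (2 * pi * k%:R / m%:R).
Proof. move=> m0; rewrite expiE angX; congr ang; rewrite -mulr_natr; field.
by rewrite pnatr_eq0 -lt0n. Qed.
Lemma expi_m m : (0 < m)%N -> expi R m ^+ m = 1.
Proof. move=> m0; rewrite expiX // mulfK ?pnatr_eq0 -?lt0n //.
by rewrite /ang mulr_natl cos2pi sin2pi. Qed.
Lemma ang_neq1 t : 0 < t < pi *+ 2 -> ang t != 1.
Proof.
case/andP => t0 t2; apply/negP => /eqP [c s].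
have [tp|tp|tp] := ltgtP t pi.
- by move: (@sin_gt0_pi R t); rewrite t0 tp => /(_ isT); rewrite s ltxx.
- have : 0 < sin (t - pi).
    apply: sin_gt0_pi; rewrite subr_gt0 tp /= ltrBlDr; by rewrite -mulr2n.
  by rewrite sinB s cospi sinpi; rewrite mulr0 mul0r subrr ltxx.
- move: c; rewrite tp cospi; lra.
Qed.
Lemma expi_prim m k : (0 < k < m)%N -> expi R m ^+ k != 1.
Proof.
case/andP=> k0 km; have m0 : (0 < m)%N by apply: leq_trans km.
rewrite expiX //; apply: ang_neq1.
have mR : (0:R) < m%:R by rewrite ltr0n.
have pi0 := pi_gt0 R.
apply/andP; split.
- by apply: divr_gt0 => //; rewrite !mulr_gt0 ?ltr0n.
- rewrite ltr_pdivrMr // -mulr_natl mulrC.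
  have km2 : (k%:R:R) < m%:R by rewrite ltr_nat.
  rewrite -mulr_natr mulr1; nra.
Qed.
Definition ip (p : {poly int}) : {poly R[i]} := map_poly (intr : int -> R[i]) p.
Lemma prodPhi_eval m (z : R[i]) : (0 < m)%N ->
  \prod_(d <- divisors m) (ip 'Phi_d).[z] = z ^+ m - 1.
Proof.
move=> m0; rewrite -horner_prod /ip -rmorph_prod /= prod_Cyclotomic //.
by rewrite rmorphB /= rmorph1 map_polyXn !hornerE.
Qed.
Lemma Phi_root m : (0 < m)%N -> (ip 'Phi_m).[expi R m] = 0.
Proof.
move=> m0; have := prodPhi_eval m (expi R m) m0; rewrite expi_m // subrr.
move/eqP; rewrite prodf_seq_eq0 => /hasP [d dd /andP [_ /eqP Hd]].
have d0 : (0 < d)%N by move: dd; rewrite -dvdn_divisors // => /dvdn_gt0; apply.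
have [dm'|dn] := eqVneq d m; first by move: Hd; rewrite dm'.
have dm : (d < m)%N by rewrite ltn_neqAle dn /= dvdn_leq // dvdn_divisors.
have := prodPhi_eval d (expi R m) d0.
have -> : \prod_(d0 <- divisors d) (ip 'Phi_d0).[expi R m] = 0.
  apply/eqP; rewrite prodf_seq_eq0; apply/hasP; exists d; first by rewrite -dvdn_divisors.
  by rewrite Hd eqxx.
move/eqP; rewrite eq_sym subr_eq0 => /eqP H.
by have := @expi_prim m d; rewrite d0 dm H eqxx => /(_ isT).
Qed.
Definition inZ n (x : R[i]) := exists p : {poly int}, x = (ip p).[xi R n].
Lemma inM_inZ n x : inM n x -> inZ n x.
Proof.
case=> c ->; exists (\sum_(k < totient n) (c k)%:P * 'X^k).
rewrite /ip rmorph_sum horner_sum; apply: eq_bigr => k _.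
by rewrite rmorphM /= map_polyC map_polyXn hornerE /= hornerXn.
Qed.
Lemma inZ_inM n x : (0 < n)%N -> inZ n x -> inM n x.
Proof.
move=> n0 [p ->].
have mon := Cyclotomic_monic n.
rewrite (Pdiv.RingMonic.rdivp_eq mon p) /ip rmorphD rmorphM /= !hornerE.
rewrite -/(ip 'Phi_n) /xi Phi_root // mulr0 add0r.
set r := Pdiv.Ring.rmodp p 'Phi_n.
have sr : (size r <= totient n)%N.
  have := Pdiv.Ring.ltn_rmodpN0 p (monic_neq0 mon).
  by rewrite size_Cyclotomic.
exists (fun k => r`_k).
rewrite (@horner_coef_wide _ (totient n)); last first.
  by rewrite /ip size_map_inj_poly //; apply: intr_inj.
by apply: eq_bigr => k _; rewrite coef_map.
Qed.
Lemma inZD n x y : inZ n x -> inZ n y -> inZ n (x + y).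
Proof. by case=> p -> [q ->]; exists (p + q); rewrite /ip rmorphD hornerD. Qed.
Lemma inZM n x y : inZ n x -> inZ n y -> inZ n (x * y).
Proof. by case=> p -> [q ->]; exists (p * q); rewrite /ip rmorphM hornerM. Qed.
Lemma inZX n x k : inZ n x -> inZ n (x ^+ k).
Proof.
move=> hx; elim: k => [|k IH]; last by rewrite exprS; apply: inZM.
by exists 1; rewrite /ip rmorph1 hornerC.
Qed.
Lemma inZxi n : inZ n (xi R n).
Proof. by exists 'X; rewrite /ip map_polyX hornerX. Qed.
Lemma inZN n x : inZ n x -> inZ n (- x).
Proof. by case=> p ->; exists (- p); rewrite /ip rmorphN hornerN. Qed.
Lemma expi2 n : (0 < n)%N -> expi R (2 * n) ^+ 2 = xi R n.
Proof.
move=> n0; rewrite expiX ?muln_gt0 // /xi expiE; congr ang.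
rewrite natrM; field; by rewrite pnatr_eq0 -lt0n.
Qed.
Lemma expin n : (0 < n)%N -> expi R (2 * n) ^+ n = -1.
Proof.
move=> n0; rewrite expiX ?muln_gt0 //.
have -> : 2 * pi * n%:R / (2 * n)%:R = pi :> R.
  rewrite natrM; field; by rewrite pnatr_eq0 -lt0n.
rewrite /ang cospi sinpi; apply/eqP; rewrite eq_complex /= oppr0 !eqxx //.
Qed.
Lemma inZe n : (0 < n)%N -> inZ n (expi R (NN n)).
Proof.
move=> n0; rewrite /NN; case: ifP => on; last exact: inZxi.
set e := expi R (2 * n).
have -> : e = - (xi R n ^+ (n./2).+1).
  rewrite -expi2 // -exprM -/e.
  have -> : (2 * (n./2).+1 = n.+1)%N.
    by rewrite -[in RHS](odd_double_half n) on -muln2; lia.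
  by rewrite exprS mulrC expin // mulN1r opprK.
by apply: inZN; apply: inZX; apply: inZxi.
Qed.
End S.
Arguments inZ_inM {R n x}.
Arguments inM_inZ {R n x}.

Lemma NN_gt0 n : (0 < n)%N -> (0 < NN n)%N.
Proof. by move=> n0; rewrite /NN; case: ifP => // _; rewrite muln_gt0. Qed.

Lemma inM0 (R : realType) n : inM n (0 : R[i]).
Proof. by exists (fun _ => 0); rewrite big1 // => k _; rewrite mul0r. Qed.

Lemma inMD (R : realType) n (x y : R[i]) : (0 < n)%N -> inM n x -> inM n y -> inM n (x + y).
Proof. by move=> n0 hx hy; apply: inZ_inM => //; apply: inZD; apply: inM_inZ. Qed.

Lemma inMeX (R : realType) n k (x : R[i]) : (0 < n)%N -> inM n x -> inM n (expi R (NN n) ^+ k * x).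
Proof.
move=> n0 hx; apply: inZ_inM => //; apply: inZM; last exact: inM_inZ.
by apply: inZX; apply: inZe.
Qed.

Theorem theorem3p1p1 (R : realType) (n : nat) (a : R[i]) :
  n \in PID_values -> inM n a -> finite_index n a ->
  (forall y : R[i], inM n y -> inH n a (transl y)) /\ inH n a (phi1 n).
Proof.
move=> nin _ _.
have n0 : (0 < n)%N by case: n nin.
split.
- move=> y hy; split.
  + by exists 0%N, false, y; split.
  + move=> x hx; exists (x + y); split; first exact: inMD.
    move=> w; split.
    * case=> v [l [hl ->]] ->; exists l; split => //; by rewrite /transl addrAC.
    * case=> l [hl ->]; exists (x + l); first by exists l.
      by rewrite /transl addrAC.
- split.
  + exists 1%N, false, 0; split; first exact: inM0.
    by move=> x /=; rewrite addr0.
  + move=> x hx; set e := expi R (NN n).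
    have he : e = e ^+ 1 * 1 by rewrite expr1 mulr1.
    exists (e * x); split.
      by have := @inMeX R n 1%N _ n0 hx; rewrite expr1.
    move=> w; split.
    * case=> v [l [[m [hm ->]] ->]] ->; exists (a * (e * m)); split.
        exists (e * m); split => //.
        by have := @inMeX R n 1%N _ n0 hm; rewrite expr1.
      by rewrite /phi1 -/e; ring.
    * case=> l [[m [hm ->]] ->].
      exists (x + a * (e ^+ (NN n).-1 * m)).
        exists (a * (e ^+ (NN n).-1 * m)); split => //.
        exists (e ^+ (NN n).-1 * m); split => //; exact: inMeX.
      rewrite /phi1 -/e mulrDr; congr (_ + _).
      rewrite mulrCA mulrA.
      have hE : e * e ^+ (NN n).-1 = 1.
        by rewrite -exprS prednK ?NN_gt0 // expi_m ?NN_gt0.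
      by rewrite mulrA -(mulrA a) hE mulr1.
Qed.
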